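(* Let $d$ be a homogeneous distance on $\mathbb H$ with closed unit ball $B$ centered at $0$. Assume there exist $\vec v\in\{(v_1,v_2,0)\}\subset\mathbb R^3$, $\vec v\neq0$, and $\bar\epsilon>0$ such that $\Omega_\epsilon(\vec v)\neq\emptyset$ for all $0<\epsilon\leq\bar\epsilon$. Then BCP does not hold in $(\mathbb H,d)$.
   Context: $\mathbb H=\mathbb R^3$ with group law $(x,y,z)\cdot(x',y',z')=(x+x',y+y',z+z'+\tfrac12(xy'-yx'))$, dilations $\delta_\lambda(x,y,z)=(\lambda x,\lambda y,\lambda^2z)$. A distance $d$ is homogeneous if it induces the Euclidean topology, is left invariant and satisfies $d(\delta_\lambda p,\delta_\lambda q)=\lambda d(p,q)$. For $p\in\mathbb H$, $\vec v\neq 0$ and $\beta\in(0,\pi/2)$, $\mathrm{cone}(p,\vec v,\beta)$ is the Euclidean half-cone in $\mathbb R^3$ with vertex $p$, axis $p+\mathbb R^+\vec v$ and opening $2\beta$. A vector $\vec v\neq0$ points out of $B$ at $p\in\partial B$ if there are an open neighbourhood $U$ of $p$ and $\beta\in(0,\pi/2)$ with $B\cap\mathrm{cone}(p,\vec v,\beta)\cap U=\{p\}$. For $p=(x_p,y_p,z_p)$, $\tau_p(q)=p\cdot q$ is affine and $(\tau_p)_*$ denotes its linear part: $(\tau_p)_*(v_1,v_2,v_3)=(v_1,v_2,v_3+\tfrac12(x_pv_2-y_pv_1))$. Let $\hat\pi(x,y,z)=(x,y,0)$. $\Omega(\vec v)$ is the set of $q\in\partial B$ such that $(\tau_{q^{-1}})_*(\vec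 v)$ points out of $B$ at $q^{-1}$; $\Omega_\epsilon(\vec v)$ is the set of $q\in\Omega(\vec v)$ such that $\hat\pi(q)=\lambda\vec w$ for some $\lambda>0$ and some $\vec w\in\operatorname{Im}\hat\pi$ with $\|\vec w-\vec v\|\leq\epsilon$ (Euclidean norm). BCP: there is $N\geq1$ such that for every bounded $A$ and every family $\mathcal B$ of closed balls with each point of $A$ the center of some ball of $\mathcal B$, some subfamily $\mathcal F$ satisfies $\chi_A\le\sum_{B\in\mathcal F}\chi_B\le N$. *)

(* Defs.v *)
From Stdlib Require Import Reals List.
Open Scope R_scope.

(* Points of H = R^3 (also used for vectors of R^3). *)
Record pt : Type := mkpt { px : R; py : R; pz : R }.

Definition origin : pt := mkpt 0 0 0.

Definition hmul (p q : pt) : pt :=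
  mkpt (px p + px q) (py p + py q)
       (pz p + pz q + / 2 * (px p * py q - py p * px q)).
Definition hinv (p : pt) : pt := mkpt (- px p) (- py p) (- pz p).
Definition dil (l : R) (p : pt) : pt := mkpt (l * px p) (l * py p) (l * l * pz p).

Definition vsub (p q : pt) : pt := mkpt (px p - px q) (py p - py q) (pz p - pz q).
Definition dot (u v : pt) : R := px u * px v + py u * py v + pz u * pz v.
Definition enorm (u : pt) : R := sqrt (dot u u).
Definition edist (p q : pt) : R := enorm (vsub p q).

Definition eopen (U : pt -> Prop) : Prop :=
  forall x, U x -> exists r, 0 < r /\ forall y, edist x y < r -> U y.

Definition boundary (S : pt -> Prop) (p : pt) : Prop :=
  forall r, 0 < r -> (exists q, edist p q < r /\ S q) /\ (exists q, edist p q < r /\ ~ S q).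

Definition is_metric (d : pt -> pt -> R) : Prop :=
  (forall p q, 0 <= d p q) /\
  (forall p q, d p q = 0 <-> p = q) /\
  (forall p q, d p q = d q p) /\
  (forall p q r, d p r <= d p q + d q r).

Definition induces_euclidean_topology (d : pt -> pt -> R) : Prop :=
  forall p eps, 0 < eps ->
    (exists del, 0 < del /\ forall q, edist p q < del -> d p q < eps) /\
    (exists del, 0 < del /\ forall q, d p q < del -> edist p q < eps).

Definition homogeneous_distance (d : pt -> pt -> R) : Prop :=
  is_metric d /\
  induces_euclidean_topology d /\
  (forall g p q, d (hmul g p) (hmul g q) = d p q) /\
  (forall l p q, 0 < l -> d (dil l p) (dil l q) = l * d p q).

Definition unit_ball (d : pt -> pt -> R) (q : pt) : Prop := d origin q <= 1.

(* Closed Euclidean half-cone with vertex p, axis p + R^+ v, opening 2 beta. *)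
Definition cone (p v : pt) (beta : R) (q : pt) : Prop :=
  dot (vsub q p) v >= cos beta * enorm (vsub q p) * enorm v.

Definition points_out (B : pt -> Prop) (p v : pt) : Prop :=
  exists U beta, eopen U /\ U p /\ 0 < beta < PI / 2 /\
    forall q, (B q /\ cone p v beta q /\ U q) <-> q = p.

(* Linear part of the left translation tau_p. *)
Definition tau_lin (p v : pt) : pt :=
  mkpt (px v) (py v) (pz v + / 2 * (px p * py v - py p * px v)).

Definition pihat (q : pt) : pt := mkpt (px q) (py q) 0.

Definition Omega (d : pt -> pt -> R) (v q : pt) : Prop :=
  boundary (unit_ball d) q /\
  points_out (unit_ball d) (hinv q) (tau_lin (hinv q) v).

Definition Omega_eps (d : pt -> pt -> R) (eps : R) (v q : pt) : Prop :=
  Omega d v q /\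
  exists (lam : R) (w : pt), 0 < lam /\ pz w = 0 /\ enorm (vsub w v) <= eps /\
    pihat q = mkpt (lam * px w) (lam * py w) (lam * pz w).

(* Besicovitch covering property. A family of closed balls is a predicate on
   (centre, radius) pairs with positive radius; the closed ball of centre c and
   radius r is {q | d c q <= r}. *)
Definition ball_in (d : pt -> pt -> R) (c : pt) (r : R) (q : pt) : Prop := d c q <= r.

Definition BCP (d : pt -> pt -> R) : Prop :=
  exists N : nat, (1 <= N)%nat /\
  forall (A : pt -> Prop) (Fam : pt -> R -> Prop),
    (exists R0, forall a, A a -> d origin a <= R0) ->
    (forall c r, Fam c r -> 0 < r) ->
    (forall a, A a -> exists r, Fam a r) ->
    exists F : pt -> R -> Prop,
      (forall c r, F c r -> Fam c r) /\
      (forall a, A a -> exists c r, F c r /\ ball_in d c r a) /\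
      (forall p (l : list (pt * R)), NoDup l ->
         (forall cr, In cr l -> F (fst cr) (snd cr) /\ ball_in d (fst cr) (snd cr) p) ->
         (length l <= N)%nat).

(* Main.v *)
Require Import Defs.
From Stdlib Require Import Reals Lra Lia List FinFun Classical.
Open Scope R_scope.

Definition scale (k : R) (u : pt) : pt := mkpt (k * px u) (k * py u) (k * pz u).

Lemma dot_nonneg u : 0 <= dot u u.
Proof. unfold dot; nra. Qed.

Lemma enorm_nonneg u : 0 <= enorm u.
Proof. apply sqrt_pos. Qed.

Lemma enorm_sq u : enorm u * enorm u = dot u u.
Proof. unfold enorm; apply sqrt_sqrt, dot_nonneg. Qed.

Lemma sqrt_le_S a S : 0 <= a -> 0 <= S -> a <= S * S -> sqrt a <= S.
Proof. intros Ha HS H. rewrite <- (sqrt_square S) by exact HS. apply sqrt_le_1_alt; exact H. Qed.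

Lemma sq_abs a : a * a = Rabs a * Rabs a.
Proof. unfold Rabs; destruct (Rcase_abs a); ring. Qed.

Lemma enorm_le_sum u : enorm u <= Rabs (px u) + Rabs (py u) + Rabs (pz u).
Proof.
  unfold enorm, dot. apply sqrt_le_S. nra.
  pose proof (Rabs_pos (px u)); pose proof (Rabs_pos (py u)); pose proof (Rabs_pos (pz u)); lra.
  rewrite (sq_abs (px u)), (sq_abs (py u)), (sq_abs (pz u)).
  pose proof (Rabs_pos (px u)); pose proof (Rabs_pos (py u)); pose proof (Rabs_pos (pz u)); nra.
Qed.

Lemma abs_x_le u : Rabs (px u) <= enorm u.
Proof.
  pose proof (enorm_sq u); pose proof (enorm_nonneg u). pose proof (Rabs_pos (px u)).
  assert (Rabs (px u) * Rabs (px u) <= enorm u * enorm u).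
  { rewrite H, <- sq_abs. unfold dot; nra. }
  nra.
Qed.

Lemma abs_y_le u : Rabs (py u) <= enorm u.
Proof.
  pose proof (enorm_sq u); pose proof (enorm_nonneg u). pose proof (Rabs_pos (py u)).
  assert (Rabs (py u) * Rabs (py u) <= enorm u * enorm u).
  { rewrite H, <- sq_abs. unfold dot; nra. }
  nra.
Qed.

Lemma CS u w : - (enorm u * enorm w) <= dot u w <= enorm u * enorm w.
Proof.
  pose proof (enorm_sq u); pose proof (enorm_sq w); pose proof (enorm_nonneg u); pose proof (enorm_nonneg w).
  assert (dot u w * dot u w <= (enorm u * enorm w) * (enorm u * enorm w)).
  { replace ((enorm u * enorm w) * (enorm u * enorm w)) with ((enorm u * enorm u) * (enorm w * enorm w)) by ring.
    rewrite H, H0. destruct u as [a1 a2 a3], w as [b1 b2 b3]; unfold dot; simpl.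
    assert (E: (a1*a1+a2*a2+a3*a3)*(b1*b1+b2*b2+b3*b3) - (a1*b1+a2*b2+a3*b3)*(a1*b1+a2*b2+a3*b3)
      = (a1*b2-a2*b1)*(a1*b2-a2*b1) + (a1*b3-a3*b1)*(a1*b3-a3*b1) + (a2*b3-a3*b2)*(a2*b3-a3*b2)) by ring.
    pose proof (Rle_0_sqr (a1*b2-a2*b1)); pose proof (Rle_0_sqr (a1*b3-a3*b1)); pose proof (Rle_0_sqr (a2*b3-a3*b2)).
    unfold Rsqr in *. lra. }
  assert (0 <= enorm u * enorm w) by nra.
  split; nra.
Qed.

Lemma enorm_triang u W : enorm u <= enorm W + enorm (vsub u W).
Proof.
  pose proof (CS W (vsub u W)).
  pose proof (enorm_sq u); pose proof (enorm_sq W); pose proof (enorm_sq (vsub u W)).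
  pose proof (enorm_nonneg u); pose proof (enorm_nonneg W); pose proof (enorm_nonneg (vsub u W)).
  assert (dot u u = dot W W + 2 * dot W (vsub u W) + dot (vsub u W) (vsub u W)).
  { destruct u, W; unfold dot, vsub; simpl; ring. }
  nra.
Qed.

Lemma cone_lemma c u W : 0 <= c < 1 -> 0 < enorm W ->
  enorm (vsub u W) <= (1 - c) / 2 * enorm W ->
  dot u W >= c * enorm u * enorm W.
Proof.
  intros Hc HW He.
  pose proof (CS (vsub u W) W). pose proof (enorm_triang u W).
  pose proof (enorm_sq W). pose proof (enorm_nonneg (vsub u W)).
  assert (dot u W = dot W W + dot (vsub u W) W).
  { destruct u, W; unfold dot, vsub; simpl; ring. }
  set (e := enorm (vsub u W)) in *. set (nW := enorm W) in *.
  assert (c * enorm u * nW <= c * (nW + e) * nW).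
  { apply Rmult_le_compat_r; [lra|]. apply Rmult_le_compat_l; lra. }
  nra.
Qed.

Lemma enorm_scale k u : 0 <= k -> enorm (scale k u) = k * enorm u.
Proof.
  intros Hk. unfold enorm.
  replace (dot (scale k u) (scale k u)) with ((k * k) * dot u u) by (unfold dot, scale; simpl; ring).
  rewrite sqrt_mult_alt by nra. rewrite sqrt_square by lra. reflexivity.
Qed.

Lemma dot_scale_r u k W : dot u (scale k W) = k * dot u W.
Proof. unfold dot, scale; simpl; ring. Qed.

Lemma cos_bounds b : 0 < b < PI / 2 -> 0 <= cos b < 1.
Proof.
  intros Hb. pose proof PI_RGT_0.
  assert (0 < cos b) by (apply cos_gt_0; lra).
  assert (0 < sin b) by (apply sin_gt_0; lra).
  pose proof (sin2_cos2 b). unfold Rsqr in *. nra.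
Qed.

Lemma hinv_l q : hmul (hinv q) q = origin.
Proof. destruct q; unfold hmul, hinv, origin; simpl; f_equal; ring. Qed.

Lemma vsub_hmul p x : vsub (hmul p x) p = tau_lin p x.
Proof. destruct p, x; unfold vsub, hmul, tau_lin; simpl; f_equal; ring. Qed.

Lemma enorm_vsub_sym a b : enorm (vsub a b) = enorm (vsub b a).
Proof. unfold enorm, dot, vsub; apply f_equal; simpl; ring. Qed.

Lemma lemmaK (d : pt -> pt -> R) v qi :
  (forall g p q, d (hmul g p) (hmul g q) = d p q) ->
  pz v = 0 -> v <> origin ->
  points_out (unit_ball d) (hinv qi) (tau_lin (hinv qi) v) ->
  exists eta, 0 < eta /\ forall q lam w, 0 < lam -> pz w = 0 -> enorm (vsub w v) <= eta ->
    px q = lam * px w -> py q = lam * py w ->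
    exists s0, 0 < s0 /\ forall s, 0 < s <= s0 -> d qi (dil s q) > 1.
Proof.
  intros Hinv Hv3 Hv0 [U [beta [HUo [HUp [Hb HB]]]]].
  set (p := hinv qi) in *. set (V := tau_lin p v) in *.
  pose proof (cos_bounds beta Hb) as Hc. set (c := cos beta) in *.
  set (m := Rabs (px v) + Rabs (py v)).
  assert (Hm : 0 < m).
  { unfold m. destruct (Req_dec (px v) 0) as [E1|E1].
    - destruct (Req_dec (py v) 0) as [E2|E2].
      + exfalso; apply Hv0. destruct v; simpl in *; unfold origin; subst; reflexivity.
      + pose proof (Rabs_pos_lt _ E2); pose proof (Rabs_pos (px v)); lra.
    - pose proof (Rabs_pos_lt _ E1); pose proof (Rabs_pos (py v)); lra. }
  set (nV := enorm V).
  assert (HnV : m / 2 <= nV).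
  { pose proof (abs_x_le V); pose proof (abs_y_le V). unfold V, tau_lin in *; simpl in *.
    unfold m, nV. lra. }
  assert (HnVp : 0 < nV) by lra.
  destruct (HUo p HUp) as [r [Hr HrU]].
  set (K := 2 + Rabs (px p) + Rabs (py p)).
  assert (HK : 2 <= K) by (unfold K; pose proof (Rabs_pos (px p)); pose proof (Rabs_pos (py p)); lra).
  exists (Rmin (m / 4) ((1 - c) * nV / (4 * K))).
  split. { apply Rmin_glb_lt. lra. apply Rdiv_lt_0_compat; nra. }
  intros q lam w Hlam Hw3 Hwv Hqx Hqy.
  set (eta := Rmin (m / 4) ((1 - c) * nV / (4 * K))) in *.
  assert (Heta1 : eta <= m / 4) by apply Rmin_l.
  assert (Heta2 : eta <= (1 - c) * nV / (4 * K)) by apply Rmin_r.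
  set (z := pz q).
  exists (Rmin (r / (4 * lam * nV)) (lam * (1 - c) * nV / (4 * (Rabs z + 1)))).
  split. { pose proof (Rabs_pos z); apply Rmin_glb_lt; apply Rdiv_lt_0_compat; try nra. apply Rmult_lt_0_compat; nra. }
  intros s [Hs Hs0].
  assert (Hs1 : s <= r / (4 * lam * nV)) by (eapply Rle_trans; [exact Hs0| apply Rmin_l]).
  assert (Hs2 : s <= lam * (1 - c) * nV / (4 * (Rabs z + 1))) by (eapply Rle_trans; [exact Hs0| apply Rmin_r]).
  clear Hs0.
  set (x := dil s q). set (y := hmul p x). set (k := s * lam).
  set (u := tau_lin p x). set (W := scale k V).
  assert (Hk : 0 < k) by (unfold k; nra).
  assert (HW : enorm W = k * nV) by (unfold W; apply enorm_scale; lra).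
  assert (HD1 : Rabs (px w - px v) <= eta).
  { eapply Rle_trans; [| exact Hwv]. apply (abs_x_le (vsub w v)). }
  assert (HD2 : Rabs (py w - py v) <= eta).
  { eapply Rle_trans; [| exact Hwv]. apply (abs_y_le (vsub w v)). }
  assert (Hest : enorm (vsub u W) <= (1 - c) / 2 * enorm W).
  { eapply Rle_trans; [apply enorm_le_sum|].
    set (D1 := px w - px v) in *. set (D2 := py w - py v) in *.
    assert (E1 : px (vsub u W) = k * D1).
    { unfold u, W, x, scale, tau_lin, dil, vsub, V, D1, k; simpl. rewrite Hqx; ring. }
    assert (E2 : py (vsub u W) = k * D2).
    { unfold u, W, x, scale, tau_lin, dil, vsub, V, D2, k; simpl. rewrite Hqy; ring. }
    assert (E3 : pz (vsub u W) = s * s * z + k * / 2 * (px p * D2 - py p * D1)).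
    { unfold u, W, x, scale, tau_lin, dil, vsub, V, D1, D2, k, z; simpl. rewrite Hqx, Hqy, Hv3; ring. }
    rewrite E1, E2, E3, HW.
    rewrite !Rabs_mult. rewrite (Rabs_right k) by lra.
    pose proof (Rabs_triang (s * s * z) (k * / 2 * (px p * D2 - py p * D1))) as T1.
    rewrite !Rabs_mult in T1.
    pose proof (Rabs_triang (px p * D2) (- (py p * D1))) as T2.
    replace (px p * D2 + - (py p * D1)) with (px p * D2 - py p * D1) in T2 by ring.
    rewrite Rabs_Ropp, !Rabs_mult in T2.
    rewrite (Rabs_right s) in T1 by lra. rewrite (Rabs_right k) in T1 by lra.
    rewrite (Rabs_right (/2)) in T1 by lra.
    pose proof (Rabs_pos (px p)); pose proof (Rabs_pos (py p)); pose proof (Rabs_pos D1); pose proof (Rabs_pos D2).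
    pose proof (Rabs_pos z).
    assert (A1 : Rabs (px p) * Rabs D2 + Rabs (py p) * Rabs D1 <= (Rabs (px p) + Rabs (py p)) * eta) by nra.
    assert (A2 : K * eta <= (1 - c) * nV / 4).
    { apply (Rmult_le_compat_l K) in Heta2; [|lra].
      replace (K * ((1 - c) * nV / (4 * K))) with ((1 - c) * nV / 4) in Heta2 by (field; lra). exact Heta2. }
    assert (A3 : s * Rabs z <= lam * (1 - c) * nV / 4).
    { apply (Rmult_le_compat_r (Rabs z + 1)) in Hs2; [|lra].
      replace (lam * (1 - c) * nV / (4 * (Rabs z + 1)) * (Rabs z + 1)) with (lam * (1 - c) * nV / 4) in Hs2 by (field; lra).
      nra. }
    assert (A4 : s * s * Rabs z <= k * ((1 - c) * nV / 4)).
    { unfold k. apply (Rmult_le_compat_l s) in A3; [|lra]. nra. }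
    assert (A5 : k * Rabs D1 + k * Rabs D2 + k * (Rabs (px p) * Rabs D2 + Rabs (py p) * Rabs D1) <= k * (K * eta)).
    { unfold K. nra. }
    assert (A6 : k * / 2 * Rabs (px p * D2 - py p * D1) <= k * (Rabs (px p) * Rabs D2 + Rabs (py p) * Rabs D1)).
    { pose proof (Rabs_pos (px p * D2 - py p * D1)). nra. }
    assert (A7 : k * (K * eta) <= k * ((1 - c) * nV / 4)) by (apply Rmult_le_compat_l; lra).
    lra. }
  assert (Hcone : dot u W >= c * enorm u * enorm W).
  { apply cone_lemma; [lra | rewrite HW; apply Rmult_lt_0_compat; lra | exact Hest]. }
  assert (Hu : enorm u <= 2 * k * nV).
  { pose proof (enorm_triang u W). rewrite HW in Hest, H.
    assert ((1 - c) / 2 * (k * nV) <= k * nV).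
    { assert (0 < k * nV) by (apply Rmult_lt_0_compat; lra). nra. }
    lra. }
  assert (HyU : U y).
  { apply HrU. unfold edist. rewrite enorm_vsub_sym. unfold y. rewrite vsub_hmul. fold u.
    apply (Rmult_le_compat_r (4 * lam * nV)) in Hs1; [|nra].
    replace (r / (4 * lam * nV) * (4 * lam * nV)) with r in Hs1 by (field; nra).
    unfold k in Hu. nra. }
  assert (Hyc : cone p V beta y).
  { unfold cone. unfold y. rewrite vsub_hmul. fold u. fold c.
    rewrite HW in Hcone. unfold W in Hcone. rewrite dot_scale_r in Hcone. fold nV.
    assert (0 <= c * enorm u * nV) by (pose proof (enorm_nonneg u); apply Rmult_le_pos; [apply Rmult_le_pos|]; lra).
    apply Rle_ge. apply (Rmult_le_reg_l k); [lra|]. nra. }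
  assert (Hyp : y <> p).
  { intro E. assert (px y = px p) by (rewrite E; reflexivity).
    assert (py y = py p) by (rewrite E; reflexivity).
    unfold y, x, hmul, dil in H, H0; simpl in H, H0. rewrite Hqx in H. rewrite Hqy in H0.
    assert (px w = 0) by (apply (Rmult_eq_reg_l (s * lam)); [lra | nra]).
    assert (py w = 0) by (apply (Rmult_eq_reg_l (s * lam)); [lra | nra]).
    rewrite H1 in HD1. rewrite H2 in HD2.
    replace (0 - px v) with (- px v) in HD1 by ring. replace (0 - py v) with (- py v) in HD2 by ring.
    rewrite Rabs_Ropp in HD1, HD2. unfold m in *. lra. }
  assert (HnB : ~ unit_ball d y).
  { intro HBy. apply Hyp. apply HB. auto. }
  unfold unit_ball in HnB.
  rewrite <- (Hinv p qi x). unfold p; rewrite hinv_l. fold p. fold y. lra.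
Qed.

Lemma dil_origin l : dil l origin = origin.
Proof. unfold dil, origin; simpl; f_equal; ring. Qed.

Lemma dil_dil a b q : dil a (dil b q) = dil (a * b) q.
Proof. destruct q; unfold dil; simpl; f_equal; ring. Qed.

Lemma boundary_one d q : homogeneous_distance d -> boundary (unit_ball d) q -> d origin q = 1.
Proof.
  intros [[Hnn [Hsep [Hsym Htri]]] [Htop _]] Hb.
  destruct (Rtotal_order (d origin q) 1) as [Hlt|[Heq|Hgt]]; auto; exfalso.
  - destruct (Htop q (1 - d origin q)) as [[del [Hdel H]] _]; [lra|].
    destruct (Hb del Hdel) as [_ [y [Hy Hny]]]. apply Hny. unfold unit_ball.
    specialize (H y Hy). specialize (Htri origin q y). lra.
  - destruct (Htop q (d origin q - 1)) as [[del [Hdel H]] _]; [lra|].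
    destruct (Hb del Hdel) as [[y [Hy Hby]] _]. unfold unit_ball in Hby.
    specialize (H y Hy). specialize (Htri origin y q). rewrite (Hsym y q) in Htri. lra.
Qed.

Lemma d_dil_origin d l q : homogeneous_distance d -> 0 < l -> d origin q = 1 -> d origin (dil l q) = l.
Proof.
  intros Hd Hl Hq. destruct Hd as [_ [_ [_ Hdil]]].
  rewrite <- (dil_origin l). rewrite Hdil by lra. rewrite Hq; ring.
Qed.

Definition Fut (d : pt -> pt -> R) (v : pt) (L : list pt) (eta : R) : Prop :=
  forall q lam w, d origin q = 1 -> 0 < lam -> pz w = 0 -> enorm (vsub w v) <= eta ->
    px q = lam * px w -> py q = lam * py w ->
    exists l0, 0 < l0 /\ forall l, 0 < l <= l0 -> forall p, In p L ->
      d p (dil l q) > d p origin /\ d (dil l q) p > d (dil l q) origin.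

Lemma build d v :
  homogeneous_distance d -> pz v = 0 -> v <> origin ->
  (exists epsbar, 0 < epsbar /\ forall eps, 0 < eps <= epsbar -> exists q, Omega_eps d eps v q) ->
  forall n, exists L, length L = n /\ NoDup L /\ (forall p, In p L -> 0 < d origin p <= 1) /\
    (forall a b, In a L -> In b L -> a <> b -> d a b > d a origin) /\
    exists eta, 0 < eta /\ Fut d v L eta.
Proof.
  intros Hd Hv3 Hv0 [epsbar [Heb Hom]].
  pose proof Hd as Hd'. destruct Hd' as [[Hnn [Hsep [Hsym Htri]]] [Htop [Hinv Hdil]]].
  induction n as [|n IH].
  - exists nil. repeat split; try constructor; try (intros; contradiction).
    exists 1. split; [lra|]. intros q lam w _ _ _ _ _ _. exists 1. split; [lra|]. intros; contradiction.
  - destruct IH as [L [HlenL [HnodL [Hpos [Hpair [eta [Heta HF]]]]]]].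
    destruct (Hom (Rmin eta epsbar)) as [q [[Hbq Hpo] [lam [w [Hlam [Hw3 [Hwv Hpi]]]]]]].
    { split; [apply Rmin_glb_lt; lra | apply Rmin_r]. }
    assert (Hq1 : d origin q = 1) by (eapply boundary_one; eauto).
    assert (Hqx : px q = lam * px w) by (apply (f_equal px) in Hpi; exact Hpi).
    assert (Hqy : py q = lam * py w) by (apply (f_equal py) in Hpi; exact Hpi).
    destruct (HF q lam w Hq1 Hlam Hw3) as [l0 [Hl0 Hl0P]]; auto.
    { eapply Rle_trans; [exact Hwv| apply Rmin_l]. }
    destruct (lemmaK d v q Hinv Hv3 Hv0 Hpo) as [etaq [Hetaq HK]].
    set (l := Rmin l0 1).
    assert (Hl : 0 < l) by (apply Rmin_glb_lt; lra).
    assert (Hll0 : l <= l0) by apply Rmin_l.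
    assert (Hl1 : l <= 1) by apply Rmin_r.
    set (p := dil l q).
    assert (Hp : d origin p = l) by (apply d_dil_origin; auto).
    assert (Hp' : d p origin = l) by (rewrite Hsym; exact Hp).
    assert (Hold := Hl0P l (conj Hl Hll0)). fold p in Hold.
    assert (HdOK : forall a, In a L -> d a p > d a origin /\ d p a > d p origin) by (intros; apply Hold; auto).
    exists (p :: L). split; [simpl; lia|]. split.
    { constructor; auto. intro Hin. destruct (HdOK p Hin) as [H1 _].
      destruct (Hsep p p) as [_ H0]. rewrite H0 in H1 by reflexivity. lra. }
    split.
    { intros a [<-|Ha]; [lra | auto]. }
    split.
    { intros a b [<-|Ha] [<-|Hb] Hab.
      - congruence.
      - apply HdOK; auto.
      - apply HdOK; auto.
      - apply Hpair; auto. }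
    exists (Rmin eta etaq). split; [apply Rmin_glb_lt; lra|].
    intros q' lam' w' Hq'1 Hlam' Hw'3 Hw'v Hq'x Hq'y.
    destruct (HF q' lam' w' Hq'1 Hlam' Hw'3) as [l0' [Hl0' Hl0'P]]; auto.
    { eapply Rle_trans; [exact Hw'v| apply Rmin_l]. }
    destruct (HK q' lam' w' Hlam' Hw'3) as [s0 [Hs0 Hs0P]]; auto.
    { eapply Rle_trans; [exact Hw'v| apply Rmin_r]. }
    exists (Rmin l0' (Rmin (l * s0) (l / 3))).
    split. { apply Rmin_glb_lt; [lra|]. apply Rmin_glb_lt; nra. }
    intros l' [Hl' Hl'0] a [<-|Ha].
    + assert (B1 : l' <= l * s0) by (eapply Rle_trans; [exact Hl'0|]; eapply Rle_trans; [apply Rmin_r|apply Rmin_l]).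
      assert (B2 : l' <= l / 3) by (eapply Rle_trans; [exact Hl'0|]; eapply Rle_trans; [apply Rmin_r|apply Rmin_r]).
      assert (Hx : d origin (dil l' q') = l') by (apply d_dil_origin; auto).
      split.
      * rewrite Hp'. unfold p.
        replace (dil l' q') with (dil l (dil (l' / l) q')) by (rewrite dil_dil; f_equal; field; lra).
        rewrite Hdil by lra.
        assert (d q (dil (l' / l) q') > 1).
        { apply Hs0P. split. apply Rdiv_lt_0_compat; lra.
          apply (Rmult_le_reg_l l); [lra|]. replace (l * (l' / l)) with l' by (field; lra). exact B1. }
        nra.
      * rewrite (Hsym (dil l' q') origin), Hx. fold p. specialize (Htri origin (dil l' q') p). lra.
    + apply Hl0'P; auto. split; auto. eapply Rle_trans; [exact Hl'0| apply Rmin_l].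
Qed.

Theorem theorem6p1 (d : pt -> pt -> R) :
  homogeneous_distance d ->
  (exists v : pt, pz v = 0 /\ v <> origin /\
     exists epsbar, 0 < epsbar /\
       forall eps, 0 < eps <= epsbar -> exists q, Omega_eps d eps v q) ->
  ~ BCP d.
Proof.
  intros Hd [v [Hv3 [Hv0 Heps]]] [N [HN HB]].
  pose proof Hd as Hd'. destruct Hd' as [[Hnn [Hsep [Hsym Htri]]] _].
  destruct (build d v Hd Hv3 Hv0 Heps (S N)) as [L [Hlen [Hnod [Hpos [Hpair _]]]]].
  destruct (HB (fun a => In a L) (fun c r => In c L /\ r = d c origin)) as [F [HF1 [HF2 HF3]]].
  - exists 1. intros a Ha; apply Hpos; exact Ha.
  - intros c r [Hc ->]. rewrite Hsym; apply Hpos; exact Hc.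
  - intros a Ha. exists (d a origin). auto.
  - assert (HFa : forall a, In a L -> F a (d a origin)).
    { intros a Ha. destruct (HF2 a Ha) as [c [r [Hcr Hball]]].
      destruct (HF1 _ _ Hcr) as [Hc Er]. subst r.
      destruct (classic (c = a)) as [<-|Hne]; [exact Hcr|].
      exfalso. specialize (Hpair c a Hc Ha Hne). unfold ball_in in Hball. lra. }
    assert (Hl := HF3 origin (map (fun a => (a, d a origin)) L)).
    rewrite length_map, Hlen in Hl.
    assert (S N <= N)%nat.
    { apply Hl.
      - apply Injective_map_NoDup; [|exact Hnod]. intros x y H. injection H; auto.
      - intros cr Hcr. apply in_map_iff in Hcr. destruct Hcr as [a [<- Ha]]. simpl.
        split; [apply HFa; exact Ha | unfold ball_in; lra]. }
    lia.
Qed.
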